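(* Normalize $\operatorname{var}(X)=1$ and $\operatorname{var}(W_1)=I_{d_1}$, and suppose $\operatorname{var}(Y,X,W_1)$ is positive definite. Then $b\in\mathcal B(r_X,r_Y,c)$ if and only if there exists $(p_1,g_1)\in\mathbb R^{d_1}\times\mathbb R^{d_1}$ with $(p_1'r_X)(g_1'r_Y)(1-\|c\|^2)=k_1-bk_0$; $(I+cr_Y')g_1=\sigma_{W_1,Y}-b\sigma_{W_1,X}$; $(I+cr_X')p_1=\sigma_{W_1,X}$; $(g_1'r_Y)^2(1-\|c\|^2)<k_0(\beta_{\text{med}}-b)^2+\operatorname{var}(Y^{\perp X,W_1})$; $(p_1'r_X)^2(1-\|c\|^2)<k_0$; $\|c\|^2<1$.
   Context: For random vectors $A,B$ with $\operatorname{var}(B)$ invertible, $A^{\perp B}=A-\operatorname{cov}(A,B)\operatorname{var}(B)^{-1}B$. $\sigma_{A,B}=\operatorname{cov}(A,B)$ (column vectors when $A=W_1$). $\beta_{\text{med}}$ is the coefficient on $X$ in the linear projection of $Y$ on $(1,X,W_1)$. $k_0=\operatorname{var}(X^{\perp W_1})$, $k_1=\operatorname{cov}(Y^{\perp W_1},X^{\perp W_1})$. For $r_X,r_Y,c\in\mathbb R^{d_1}$, $\mathcal B(r_X,r_Y,c)$ is the set of $b\in\mathbb R$ such that for some $(p_1,g_1)\in\mathbb R^{d_1}\times\mathbb R^{d_1}$ (with $\Sigma_{\text{obs}}=\operatorname{var}(W_1)$): $\operatorname{cov}(Y,X)=b\operatorname{var}(X)+g_1'(\Sigma_{\text{obs}}+cr_X'+r_Yc'+r_Yr_X')p_1$;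 $\operatorname{cov}(Y,W_1)=b\operatorname{cov}(X,W_1)+g_1'(\Sigma_{\text{obs}}+r_Yc')$; $\operatorname{cov}(X,W_1)=p_1'(\Sigma_{\text{obs}}+r_Xc')$; $\operatorname{var}(Y)>b^2\operatorname{var}(X)+g_1'(\Sigma_{\text{obs}}+r_Yr_Y'+2r_Yc')g_1+2bg_1'(\Sigma_{\text{obs}}+cr_X'+r_Yc'+r_Yr_X')p_1$; $\operatorname{var}(X)>p_1'(\Sigma_{\text{obs}}+2r_Xc'+r_Xr_X')p_1$; $1>c'\Sigma_{\text{obs}}^{-1}c$. *)

(* Defs.v *)
From HB Require Import structures.
From mathcomp Require Import all_boot all_order all_algebra.
Set Implicit Arguments. Unset Strict Implicit. Unset Printing Implicit Defensive.
Import Order.TTheory GRing.Theory Num.Theory.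
Local Open Scope ring_scope.

(* Second moments of (Y, X, W1):
   sYY = var Y, sYX = cov(Y,X), sXX = var X,
   sYW = cov(W1,Y) = sigma_{W1,Y} (column), sXW = cov(W1,X) = sigma_{W1,X} (column),
   SW = var W1 = Sigma_obs. *)

Section Defs.
Variables (R : realFieldType) (d1 : nat).
Variables (sYY sYX sXX : R) (sYW sXW : 'cV[R]_d1) (SW : 'M[R]_d1).

Definition sc (M : 'M[R]_1) : R := M ord0 ord0.

Definition varXW : 'M[R]_(1 + d1) :=
  block_mx (sXX%:M) (sXW^T) sXW SW.
Definition covXW_Y : 'cV[R]_(1 + d1) := col_mx (sYX%:M) sYW.

Definition varYXW : 'M[R]_(1 + (1 + d1)) :=
  block_mx (sYY%:M) (covXW_Y^T) covXW_Y varXW.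

Definition posdef (n : nat) (S : 'M[R]_n) : Prop :=
  forall v : 'cV[R]_n, v != 0 -> 0 < sc (v^T *m S *m v).

(* k0 = var(X^{perp W1}), k1 = cov(Y^{perp W1}, X^{perp W1}) *)
Definition k0 : R := sXX - sc (sXW^T *m invmx SW *m sXW).
Definition k1 : R := sYX - sc (sYW^T *m invmx SW *m sXW).

(* beta_med: coefficient on X in the linear projection of Y on (1, X, W1) *)
Definition beta_med : R :=
  (invmx varXW *m covXW_Y) (lshift d1 ord0) ord0.

Definition varY_perp_XW : R :=
  sYY - sc (covXW_Y^T *m invmx varXW *m covXW_Y).

Definition Bset (rX rY c : 'cV[R]_d1) (b : R) : Prop :=
  exists (p1 g1 : 'cV[R]_d1),
    (sYX = b * sXX + sc (g1^T *m (SW + c *m rX^T + rY *m c^T + rY *m rX^T) *m p1)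
     /\ sYW^T = b *: sXW^T + g1^T *m (SW + rY *m c^T)
     /\ sXW^T = p1^T *m (SW + rX *m c^T)
     /\ sYY > b ^+ 2 * sXX
              + sc (g1^T *m (SW + rY *m rY^T + 2%:R *: (rY *m c^T)) *m g1)
              + 2%:R * b * sc (g1^T *m (SW + c *m rX^T + rY *m c^T + rY *m rX^T) *m p1)
     /\ sXX > sc (p1^T *m (SW + 2%:R *: (rX *m c^T) + rX *m rX^T) *m p1)
     /\ 1 > sc (c^T *m invmx SW *m c)).

End Defs.

(* Main.v *)
Require Import Defs.
From HB Require Import structures.
From mathcomp Require Import all_boot all_order all_algebra.
From mathcomp Require Import ring lra.
Import Order.TTheory GRing.Theory Num.Theory.
Set Implicit Arguments. Unset Strict Implicit.
Local Open Scope ring_scope.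

Section Aux.
Variables (R : realFieldType) (d1 : nat).
Implicit Types (u v w z : 'cV[R]_d1) (A B : 'M[R]_d1).

Definition dot u v : R := sc (u^T *m v).

Lemma scD (M N : 'M[R]_1) : sc (M + N) = sc M + sc N.
Proof. by rewrite /sc mxE. Qed.
Lemma scZ k (M : 'M[R]_1) : sc (k *: M) = k * sc M.
Proof. by rewrite /sc mxE. Qed.
Lemma scN (M : 'M[R]_1) : sc (- M) = - sc M.
Proof. by rewrite /sc mxE. Qed.
Lemma scM (M N : 'M[R]_1) : sc (M *m N) = sc M * sc N.
Proof. by rewrite /sc mxE big_ord1. Qed.
Lemma scT (M : 'M[R]_1) : sc (M^T) = sc M.
Proof. by rewrite /sc mxE. Qed.

Lemma dotC u v : dot u v = dot v u.
Proof. by rewrite /dot -scT trmx_mul trmxK. Qed.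
Lemma dotDl u v w : dot (u + v) w = dot u w + dot v w.
Proof. by rewrite /dot linearD /= mulmxDl scD. Qed.
Lemma dotDr u v w : dot w (u + v) = dot w u + dot w v.
Proof. by rewrite /dot mulmxDr scD. Qed.
Lemma dotZl k u v : dot (k *: u) v = k * dot u v.
Proof. by rewrite /dot linearZ /= -scalemxAl scZ. Qed.
Lemma dotZr k u v : dot u (k *: v) = k * dot u v.
Proof. by rewrite /dot -scalemxAr scZ. Qed.
Lemma dotNl u v : dot (- u) v = - dot u v.
Proof. by rewrite -scaleN1r dotZl mulN1r. Qed.
Lemma dotNr u v : dot u (- v) = - dot u v.
Proof. by rewrite -scaleN1r dotZr mulN1r. Qed.
Lemma dotBl u v w : dot (u - v) w = dot u w - dot v w.
Proof. by rewrite dotDl dotNl. Qed.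
Lemma dotBr u v w : dot w (u - v) = dot w u - dot w v.
Proof. by rewrite dotDr dotNr. Qed.

Lemma L1 u z A B : sc (u^T *m (A + B) *m z) = sc (u^T *m A *m z) + sc (u^T *m B *m z).
Proof. by rewrite mulmxDr mulmxDl scD. Qed.
Lemma L2 u z : sc (u^T *m 1%:M *m z) = dot u z.
Proof. by rewrite mulmx1. Qed.
Lemma L3 u v w z : sc (u^T *m (v *m w^T) *m z) = dot u v * dot w z.
Proof. by rewrite mulmxA -mulmxA scM. Qed.
Lemma L4 k u z A : sc (u^T *m (k *: A) *m z) = k * sc (u^T *m A *m z).
Proof. by rewrite -scalemxAr -scalemxAl scZ. Qed.

Lemma cV11 (v : 'cV[R]_d1) (M : 'M[R]_1) : v *m M = sc M *: v.
Proof. by rewrite {1}[M]mx11_scalar mul_mx_scalar. Qed.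

Lemma Lvec v w z : (1%:M + v *m w^T) *m z = z + dot w z *: v.
Proof. by rewrite mulmxDl mul1mx -mulmxA cV11. Qed.

Lemma Ltr v w z (M : 'cV[R]_d1) : (M^T = z^T *m (1%:M + w *m v^T)) <-> (M = (1%:M + v *m w^T) *m z).
Proof.
split=> H.
  by rewrite -[M]trmxK H trmx_mul trmxK linearD /= trmx1 trmx_mul trmxK.
by rewrite H trmx_mul linearD /= trmx1 trmx_mul trmxK.
Qed.

End Aux.
Lemma rV11 (R : realFieldType) (d1 : nat) (r : 'rV[R]_d1) (M : 'M[R]_1) : M *m r = sc M *: r.
Proof. by rewrite {1}[M]mx11_scalar mul_scalar_mx. Qed.

Lemma varXW_unit (R : realFieldType) (d1 : nat) (s : 'cV[R]_d1) :
  1 - dot s s != 0 -> varXW 1 s 1%:M \in unitmx.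
Proof.
move=> hk.
set k := (1 - dot s s)^-1.
pose Mi := block_mx (k%:M : 'M[R]_1) (- k *: s^T) (- k *: s) (1%:M + k *: (s *m s^T)).
have: varXW 1 s 1%:M *m Mi = 1%:M.
  rewrite /varXW /Mi mulmx_block scalar_mx_block.
  rewrite !mul1mx -!scalemxAr !cV11 mulmxDr mulmx1 -scalemxAr mulmxA rV11 -/(dot s s).
  have hss : s^T *m s = (dot s s)%:M by rewrite {1}[s^T *m s]mx11_scalar.
  rewrite hss.
  have hsc : sc (k%:M : 'M[R]_1) = k by rewrite /sc mxE.
  rewrite hsc. set D := dot s s.
  congr block_mx.
  - apply/matrixP=> i j; rewrite !ord1 !mxE /= /k /D !mulr1n. field. done.
  - apply/matrixP=> i j; rewrite !mxE /k /D. field. done.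
  - apply/matrixP=> i j; rewrite !mxE. ring.
  - apply/matrixP=> i j; rewrite !mxE. ring.
by case/mulmx1_unit.
Qed.

Lemma beta_var (R : realFieldType) (d1 : nat) (sYY sYX : R) (sYW sXW : 'cV[R]_d1) :
  1 - dot sXW sXW != 0 ->
  beta_med sYX 1 sYW sXW 1%:M = (sYX - dot sYW sXW) / (1 - dot sXW sXW) /\
  varY_perp_XW sYY sYX 1 sYW sXW 1%:M
    = sYY - dot sYW sYW - (sYX - dot sYW sXW) ^+ 2 / (1 - dot sXW sXW).
Proof.
move=> hk.
have hU := @varXW_unit _ _ _ hk.
set V := varXW 1 sXW 1%:M in hU *.
set u := invmx V *m covXW_Y sYX sYW.
have Hu : V *m u = covXW_Y sYX sYW by rewrite /u mulmxA mulmxV // mul1mx.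
have hb : beta_med sYX 1 sYW sXW 1%:M = sc (usubmx u).
  by rewrite /beta_med -/V -/u -{1}(vsubmxK u) col_mxEu.
have hv : varY_perp_XW sYY sYX 1 sYW sXW 1%:M
   = sYY - (sYX * sc (usubmx u) + dot sYW (dsubmx u)).
  rewrite /varY_perp_XW -/V -mulmxA -/u -{1}(vsubmxK u) /covXW_Y tr_col_mx mul_row_col.
  by rewrite scD tr_scalar_mx mul_scalar_mx scZ.
move: Hu; rewrite -(vsubmxK u) /V /varXW mul_block_col /covXW_Y.
move/eq_col_mx=> [H1 H2].
move: H2; rewrite mul1mx cV11 => H2.
have H2' : dsubmx u = sYW - sc (usubmx u) *: sXW by rewrite -H2 addrC addKr.
move: H1; rewrite mul1mx => /(congr1 (@sc R)); rewrite scD -/(dot sXW _) H2'.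
rewrite dotBr dotZr /sc [in X in _ = X]mxE /= mulr1n -/(sc (usubmx u)) => H1.
rewrite hb hv H2' dotBr dotZr (dotC sXW sYW) in H1 *.
set x := sc (usubmx u) in H1 *.
have -> : x = (sYX - dot sYW sXW) / (1 - dot sXW sXW).
  apply: (mulIf hk); rewrite divfK //. rewrite -H1. ring.
split=> //. field. done.
Qed.

Lemma dotX (R : realFieldType) (d1 : nat) (p c : 'cV[R]_d1) a :
  dot (p + a *: c) (p + a *: c) = dot p p + 2 * a * dot p c + a ^+ 2 * dot c c.
Proof. rewrite !dotDl !dotDr !dotZl !dotZr (dotC c p). ring. Qed.
Lemma dotXY (R : realFieldType) (d1 : nat) (g p c : 'cV[R]_d1) a e :
  dot (g + e *: c) (p + a *: c) = dot g p + a * dot g c + e * dot p c + e * a * dot c c.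
Proof. rewrite !dotDl !dotDr !dotZl !dotZr (dotC c p). ring. Qed.

Unset Implicit Arguments.
Lemma dotE (R : realFieldType) (d1 : nat) (u v : 'cV[R]_d1) : sc (u^T *m v) = dot u v.
Proof. by []. Qed.

Theorem mainTheorem18 (R : realFieldType) (d1 : nat)
  (sYY sYX sXX : R) (sYW sXW : 'cV[R]_d1) (SW : 'M[R]_d1)
  (rX rY c : 'cV[R]_d1) (b : R) :
  sXX = 1 -> SW = 1%:M ->
  posdef (varYXW sYY sYX sXX sYW sXW SW) ->
  (Bset sYY sYX sXX sYW sXW SW rX rY c b <->
   exists (p1 g1 : 'cV[R]_d1),
     (sc (p1^T *m rX) * sc (g1^T *m rY) * (1 - sc (c^T *m c))
           = k1 sYX sYW sXW SW - b * k0 sXX sXW SW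
      /\ (1%:M + c *m rY^T) *m g1 = sYW - b *: sXW
      /\ (1%:M + c *m rX^T) *m p1 = sXW
      /\ sc (g1^T *m rY) ^+ 2 * (1 - sc (c^T *m c))
           < k0 sXX sXW SW * (beta_med sYX sXX sYW sXW SW - b) ^+ 2
             + varY_perp_XW sYY sYX sXX sYW sXW SW
      /\ sc (p1^T *m rX) ^+ 2 * (1 - sc (c^T *m c)) < k0 sXX sXW SW
      /\ sc (c^T *m c) < 1)).
Proof.
move=> -> -> _.
rewrite /Bset /k0 /k1 invmx1 !L2 !dotE.
have E4 : forall (sXW sYW : 'cV[R]_d1), 1 - dot sXW sXW != 0 ->
   (1 - dot sXW sXW) * (beta_med sYX 1 sYW sXW 1%:M - b) ^+ 2
   + varY_perp_XW sYY sYX 1 sYW sXW 1%:M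
   = sYY - dot sYW sYW - 2 * b * (sYX - dot sYW sXW) + b ^+ 2 * (1 - dot sXW sXW).
  move=> s1 s2 hk; have [-> ->] := beta_var sYY sYX s2 hk. field. done.
split.
- case=> p [g [B1 [B2 [B3 [B4 [B5 B6]]]]]].
  exists p, g.
  move: B3 => /Ltr; rewrite Lvec => hX.
  have B2' : (sYW - b *: sXW)^T = g^T *m (1%:M + rY *m c^T).
    by rewrite linearB /= linearZ /= B2 addrC addKr.
  move: B2' => /Ltr; rewrite Lvec => hY.
  have T6 : dot c c < 1 by [].
  rewrite !L1 !L4 !L2 !L3 in B1 B4 B5.
  have hYe : sYW = b *: sXW + (g + dot rY g *: c) by rewrite -hY addrC subrK.
  rewrite !dotE; subst sYW; subst sXW.
  have hXX : dot (p + dot rX p *: c) (p + dot rX p *: c)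
     = dot p p + 2 * dot p rX * dot p c + dot p rX ^+ 2 * dot c c.
    by rewrite dotX (dotC rX p).
  rewrite (dotC rX p) (dotC rY g) (dotC c p) (dotC c g) in B1 B4 B5.
  have hk : 0 < 1 - dot (p + dot rX p *: c) (p + dot rX p *: c).
    have : 0 <= dot p rX ^+ 2 * (1 - dot c c) by rewrite mulr_ge0 ?sqr_ge0 // subr_ge0 ltW.
    rewrite hXX; nra.
  rewrite E4 ?lt0r_neq0 //.
  split; [|split; [by rewrite [RHS]addrC addKr|split; [by []|]]].
  all: do 3 rewrite ?dotDl ?dotDr ?dotZl ?dotZr.
  all: rewrite ?(dotC rX p) ?(dotC rY g) ?(dotC c p) ?(dotC c g) ?(dotC p g).
  - lra.
  - split; [|split; [|done]]; nra.
- case=> p [g [T1 [T2 [T3 [T4 [T5 T6]]]]]].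
  exists p, g.
  have B2 : sYW^T = b *: sXW^T + g^T *m (1%:M + rY *m c^T).
    have := (Ltr c rY g (sYW - b *: sXW)).2 (esym T2).
    by move=> <-; rewrite linearB /= linearZ /= [RHS]addrC subrK.
  have B3 := (Ltr c rX p sXW).2 (esym T3).
  rewrite !dotE in T1 T4 T5.
  move: T2 T3; rewrite !Lvec => hY hX.
  have hYe : sYW = b *: sXW + (g + dot rY g *: c) by rewrite hY addrC subrK.
  subst sYW; subst sXW.
  have hXX : dot (p + dot rX p *: c) (p + dot rX p *: c)
     = dot p p + 2 * dot p rX * dot p c + dot p rX ^+ 2 * dot c c.
    by rewrite dotX (dotC rX p).
  have hk : 0 < 1 - dot (p + dot rX p *: c) (p + dot rX p *: c).
    have : 0 <= dot p rX ^+ 2 * (1 - dot c c).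
      by rewrite mulr_ge0 ?sqr_ge0 // subr_ge0 ltW.
    rewrite (dotC rX p) in T5 *; lra.
  rewrite E4 ?lt0r_neq0 // in T4.
  split; [|split; [exact: B2|split; [exact: B3|]]].
  all: rewrite ?L1 ?L4 ?L2 ?L3.
  all: do 3 rewrite ?dotDl ?dotDr ?dotZl ?dotZr in T1 T4 T5.
  all: rewrite ?(dotC rX p) ?(dotC rY g) ?(dotC c p) ?(dotC c g) ?(dotC p g) in T1 T4 T5 *.
  - lra.
  - split; [|split; [lra|done]]. nra.
Qed.
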